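(* Let $G$ be a finite group of order $9$ (written additively), and let $A,B\subseteq G$. Then: (i) if $|A|=3$ and $A$ is zero-sum free, then $|\sum(A)|\ge 6$; (ii) if $|A|=3$ and $0\notin A$, then $|\sum(A)|\ge 5$; (iii) if $|A|=4$ and $0\notin A$, then $|\sum(A)|\ge 7$; (iv) if $|A|=4$, then $|\sum_2(A)|\ge 5$; (v) if $|A|=4$ and $|B|\ge 2$, then $|A+B|\ge 5$.
   Context: For a subset $A=\{a_1,\dots,a_k\}$ of $G$, $\sum(A)$ is the set of all sums $a_{i_1}+\cdots+a_{i_l}$ with $1\le l\le k$ and $i_1,\dots,i_l$ pairwise distinct; $\sum_r(A)$ is the set of all such sums with exactly $r$ pairwise distinct indices. $A$ is zero-sum free if $0\notin\sum(A)$. $A+B=\{a+b: a\in A, b\in B\}$. *)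

(* Defs.v *)
From HB Require Import structures.
From mathcomp Require Import all_boot all_order all_algebra.
Set Implicit Arguments. Unset Strict Implicit. Unset Printing Implicit Defensive.
Import GRing.Theory.
Local Open Scope ring_scope.

Definition subset_sums (G : finZmodType) (A : {set G}) : {set G} :=
  [set \sum_(x in S) x | S : {set G} in powerset A & S != set0].

Definition subset_sums_r (G : finZmodType) (r : nat) (A : {set G}) : {set G} :=
  [set \sum_(x in S) x | S : {set G} in powerset A & #|S| == r].

Definition zero_sum_free (G : finZmodType) (A : {set G}) : bool :=
  0 \notin subset_sums A.

Definition sumset (G : finZmodType) (A B : {set G}) : {set G} :=
  [set a + b | a in A, b in B].

(* Main.v *)
Require Import Defs.
From HB Require Import structures.
From mathcomp Require Import all_boot all_order all_algebra.
From mathcomp Require Import all_fingroup cyclic zify.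
Set Implicit Arguments. Unset Strict Implicit. Unset Printing Implicit Defensive.
Import GRing.Theory FinRing.Theory.
Local Open Scope ring_scope.
Definition addZ9 i j := ((i + j) %% 9)%N.
Definition addZ33 i j := (((i %% 3 + j %% 3) %% 3) + 3 * ((i %/ 3 + j %/ 3) %% 3))%N.

Lemma mulrn_mod (G : zmodType) (x : G) d m : x *+ d = 0 -> x *+ (m %% d) = x *+ m.
Proof.
move=> Hd; by rewrite [in RHS](divn_eq m d) mulrnDr mulrnA mulrnAC Hd mul0rn add0r.
Qed.

Section Cls.
Variables (G : finZmodType) (hG : #|G| = 9%N).

Lemma nine (x : G) : x *+ 9 = 0.
Proof.
have := expg_cardG (in_setT x); rewrite cardsT hG.
by rewrite zmodXgE.
Qed.

Lemma classify : exists add f,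
  [/\ add = addZ9 \/ add = addZ33, f 0%N = 0 :> G,
      forall i j, f (add i j) = f i + f j &
      forall i j, (i < 9)%N -> (j < 9)%N -> f i = f j -> i = j].
Proof.
case: (boolP [exists x : G, x *+ 3 != 0]) => [/existsP [x Hx] | H3].
  have Hd : (#[x]%g %| 9)%N by rewrite -hG -cardsT order_dvdG ?in_setT.
  have Hn3 : ~~ (#[x]%g %| 3)%N by rewrite order_dvdn zmodXgE.
  have Ho : #[x]%g = 9%N.
    have := dvdn_leq (isT : (0 < 9)%N) Hd; move: Hd Hn3.
    move: (#[x]%g) => n; do 10?[case: n => [|n]] => //.
  exists addZ9, (fun k => x *+ k); split => //.
  - by left.
  - by move=> i j; rewrite /addZ9 mulrn_mod ?nine // mulrnDr.
  move=> i j Hi Hj /eqP; rewrite -!zmodXgE eq_expg_mod_order Ho !modn_small //.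
  by move/eqP.
have H3' : forall y : G, y *+ 3 = 0.
  by move=> y; apply/eqP; move: H3; rewrite negb_exists => /forallP /(_ y); rewrite negbK.
have [g Hg] : exists g : G, g != 0.
  have : (1 < #|[set: G]|)%N by rewrite cardsT hG.
  case/card_gt1P => a [b [_ _ Hab]].
  case: (eqVneq a 0) => [Ha|Ha]; last by exists a.
  by exists b; rewrite -Ha eq_sym.
set T3 := [set:: [:: 0; g; g *+ 2]].
have [h _ Hh] : exists2 h, h \in [set: G] & h \notin T3.
  apply/subsetPn; apply/negP => /subset_leq_card.
  rewrite cardsT hG /T3.
  have := card_size [:: 0; g; g *+ 2]; rewrite cardsE /= => H1 H2; by have := leq_trans H2 H1.
have [h0 hg hg2] : [/\ h != 0, h != g & h != g *+ 2].
  by move: Hh; rewrite /T3 !inE !negb_or => /and3P.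
have neg3 : forall (y : G) k, (k <= 3)%N -> y *+ (3 - k) = - (y *+ k).
  by move=> y k Hk; apply/eqP; rewrite -addr_eq0 -mulrnDr subnK // H3'.
have g2 : g *+ 2 = - g by rewrite -(neg3 g 1%N).
have h2 : h *+ 2 = - h by rewrite -(neg3 h 1%N).
have K : forall a b, (a < 3)%N -> (b < 3)%N -> g *+ a + h *+ b = 0 -> a = 0%N /\ b = 0%N.
  move=> a b; case: a => [|[|[|a]]] //; case: b => [|[|[|b]]] // _ _.
  - by move/eqP; rewrite mulr0n add0r mulr1n (negbTE h0).
  - by move/eqP; rewrite mulr0n add0r h2 oppr_eq0 (negbTE h0).
  - by move/eqP; rewrite mulr0n addr0 mulr1n (negbTE Hg).
  - by move/eqP; rewrite !mulr1n addrC addr_eq0 -g2 (negbTE hg2).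
  - by move/eqP; rewrite mulr1n h2 subr_eq0 eq_sym (negbTE hg).
  - by move/eqP; rewrite mulr0n addr0 g2 oppr_eq0 (negbTE Hg).
  - by move/eqP; rewrite mulr1n g2 addrC addr_eq0 opprK (negbTE hg).
  - by move/eqP; rewrite h2 subr_eq0 eq_sym (negbTE hg2).
exists addZ33, (fun k => g *+ (k %% 3) + h *+ (k %/ 3)); split.
- by right.
- by rewrite mod0n div0n !mulr0n addr0.
- move=> i j; rewrite /addZ33.
  have Hr : ((i %% 3 + j %% 3) %% 3 < 3)%N by rewrite ltn_pmod.
  rewrite addnC mulnC modnMDl divnMDl // (divn_small Hr) addn0 (modn_small Hr).
  by rewrite (mulrn_mod _ (H3' g)) (mulrn_mod _ (H3' h)) !mulrnDr addrACA.
move=> i j Hi Hj Hf.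
have E : g *+ ((i %% 3 + (3 - j %% 3)) %% 3) + h *+ ((i %/ 3 + (3 - j %/ 3)) %% 3) = 0.
  rewrite (mulrn_mod _ (H3' g)) (mulrn_mod _ (H3' h)) !mulrnDr !neg3; last 2 first.
  - lia.
  - lia.
  by rewrite addrACA -opprD Hf subrr.
have [E1 E2] := K _ _ (ltn_pmod _ (isT : (0 < 3)%N)) (ltn_pmod _ (isT : (0 < 3)%N)) E.
lia.
Qed.
End Cls.

Section GenSS.
Context {T : Type} (add : T -> T -> T) (z : T).
Fixpoint ssP (P : nat -> bool) (s : seq T) : seq T :=
  match s with
  | [::] => if P 0%N then [:: z] else [::]
  | x :: s' => ssP P s' ++ map (add x) (ssP (fun n => P n.+1) s')
  end.
End GenSS.

Lemma ssP_set (G : finZmodType) (s : seq G) (P : nat -> bool) : uniq s ->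
  [set \sum_(x in S) x | S : {set G} in powerset [set:: s] & P #|S|] = [set:: ssP +%R 0 P s].
Proof.
elim: s P => [|x s IH] P /=.
  move=> _; apply/setP => y; rewrite set_nil powerset0.
  apply/imsetP/idP.
    case=> S; rewrite !inE => /andP [/eqP -> HP] ->.
    by move: HP; rewrite big_set0 cards0 => ->; rewrite inE.
  case: (boolP (P 0%N)) => HP; rewrite !inE // => /eqP ->.
  by exists set0; rewrite ?inE ?cards0 ?HP ?big_set0 ?eqxx.
case/andP => xs us; apply/setP => y; apply/imsetP/idP.
  case=> S; rewrite inE powersetE => /andP [HS HP] ->.
  rewrite inE mem_cat; case: (boolP (x \in S)) => xS.
    apply/orP; right; apply/mapP; exists (\sum_(z in S :\ x) z); last first.
      by rewrite (big_setD1 _ xS).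
    suff : \sum_(z in S :\ x) z \in [set:: ssP +%R 0 (fun n => P n.+1) s] by rewrite inE.
    rewrite -(IH _ us); apply/imsetP; exists (S :\ x) => //.
    rewrite inE powersetE; apply/andP; split.
      apply/subsetP => w; rewrite !inE => /andP [wx wS].
      by move/subsetP: HS => /(_ w wS); rewrite !inE (negbTE wx).
    by move: HP; rewrite (cardsD1 x S) xS.
  apply/orP; left.
  suff : \sum_(z in S) z \in [set:: ssP +%R 0 P s] by rewrite inE.
  rewrite -(IH _ us); apply/imsetP; exists S => //.
  rewrite inE powersetE HP andbT; apply/subsetP => w wS.
  move/subsetP: HS => /(_ w wS); rewrite !inE; case/orP => // /eqP wx.
  by move: xS; rewrite -wx wS.
rewrite inE mem_cat => /orP [H | /mapP [y' H ->]].
  have : y \in [set:: ssP +%R 0 P s] by rewrite inE.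
  rewrite -(IH P us) => /imsetP [S]; rewrite inE powersetE => /andP [HS HP] ->.
  exists S => //; rewrite inE powersetE HP andbT.
  by apply: subset_trans HS _; rewrite set_cons; apply: subsetUr.
have : y' \in [set:: ssP +%R 0 (fun n => P n.+1) s] by rewrite inE.
rewrite -(IH _ us) => /imsetP [S]; rewrite inE powersetE => /andP [HS HP] ->.
have xS : x \notin S.
  by apply/negP => /(subsetP HS); rewrite inE (negbTE xs).
exists (x |: S); last by rewrite big_setU1.
rewrite inE powersetE cardsU1 xS add1n HP andbT set_cons.
exact: setUS.
Qed.

Lemma ssP_map (G : zmodType) (add : nat -> nat -> nat) (f : nat -> G) P I :
  f 0%N = 0 -> (forall i j, f (add i j) = f i + f j) ->
  map f (ssP add 0%N P I) = ssP +%R 0 P (map f I).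
Proof.
move=> H0 Hadd; elim: I P => [|i I IH] P /=.
  by case: (P 0%N) => //=; rewrite H0.
rewrite map_cat IH; congr (_ ++ _).
rewrite -IH -!map_comp; apply: eq_map => j /=; by rewrite Hadd.
Qed.

Lemma ssP_lt (add : nat -> nat -> nat) P I y :
  (forall i j, add i j < 9)%N -> y \in ssP add 0%N P I -> (y < 9)%N.
Proof.
move=> Hlt; elim: I P => [|i I IH] P /=.
  by case: (P 0%N); rewrite ?inE // => /eqP ->.
by rewrite mem_cat => /orP [/IH // | /mapP [k _ ->]].
Qed.

Lemma card_setseq (G : finType) (l : seq G) : #|[set:: l]| = size (undup l).
Proof.
by rewrite cardsE -(eq_card (mem_undup l)); apply/card_uniqP; apply: undup_uniq.
Qed.

Lemma size_undup_map_in (G : eqType) (f : nat -> G) (L : seq nat) :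
  (forall i j, (i < 9)%N -> (j < 9)%N -> f i = f j -> i = j) ->
  all (fun k => k < 9)%N L -> size (undup (map f L)) = size (undup L).
Proof.
move=> Hinj; elim: L => [|x L IH] //= /andP [xl aL].
have -> : (f x \in map f L) = (x \in L).
  apply/mapP/idP => [[y yL Hy]|xL]; last by exists x.
  have yl : (y < 9)%N by move/allP: aL => /(_ y yL).
  by rewrite (Hinj _ _ xl yl Hy).
by case: (x \in L) => //=; rewrite IH.
Qed.

Fixpoint bseqs n : seq (seq bool) :=
  if n is n'.+1 then map (cons true) (bseqs n') ++ map (cons false) (bseqs n') else [:: [::]].
Definition subs k := [seq I <- [seq mask m (iota 0 9) | m <- bseqs 9] | size I == k].
Definition Spos (add : nat -> nat -> nat) I := ssP add 0%N (fun n => 0 < n)%N I.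
Definition S2 (add : nat -> nat -> nat) I := ssP add 0%N (fun n => n == 2)%N I.
Definition chk (add : nat -> nat -> nat) :=
  [&& all (fun I => (0%N \notin Spos add I) ==> (6 <= size (undup (Spos add I)))%N) (subs 3),
      all (fun I => (0%N \notin I) ==> (5 <= size (undup (Spos add I)))%N) (subs 3),
      all (fun I => (0%N \notin I) ==> (7 <= size (undup (Spos add I)))%N) (subs 4),
      all (fun I => (5 <= size (undup (S2 add I)))%N) (subs 4) &
      all (fun I => all (fun J => 5 <= size (undup [seq add a b | a <- I, b <- J]))%N (subs 2)) (subs 4)].
Lemma chk9 : chk addZ9. Proof. vm_compute. reflexivity. Qed.
Lemma chk33 : chk addZ33. Proof. vm_compute. reflexivity. Qed.

Lemma mem_bseqs m : m \in bseqs (size m).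
Proof.
elim: m => [|b m IH] /=; first by rewrite inE.
by case: b; rewrite mem_cat (map_f _ IH) ?orbT.
Qed.

Section Main.
Variables (G : finZmodType) (hG : #|G| = 9%N) (add : nat -> nat -> nat) (f : nat -> G)
 (H0 : f 0%N = 0) (Hadd : forall i j, f (add i j) = f i + f j)
 (Hlt : forall i j, (add i j < 9)%N)
 (Hinj : forall i j, (i < 9)%N -> (j < 9)%N -> f i = f j -> i = j).

Lemma surj x : exists2 k, (k < 9)%N & f k = x.
Proof.
have Hc : #|[set:: map f (iota 0 9)]| = 9%N.
  rewrite card_setseq size_undup_map_in // ?undup_id ?iota_uniq ?size_iota //.
have : x \in [set:: map f (iota 0 9)].
  have -> : [set:: map f (iota 0 9)] = [set: G].
    by apply/eqP; rewrite eqEcard subsetT cardsT hG Hc.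
  by rewrite inE.
by rewrite inE => /mapP [k]; rewrite mem_iota => /andP [_ Hk] ->; exists k.
Qed.

Definition idx (X : {set G}) := [seq k <- iota 0 9 | f k \in X].

Lemma idx_lt (X : {set G}) : all (fun k => k < 9)%N (idx X).
Proof. by apply/allP => k; rewrite mem_filter mem_iota add0n => /and3P [_ _ ->]. Qed.

Lemma idx_set (X : {set G}) : [set:: map f (idx X)] = X.
Proof.
apply/setP => x; rewrite inE; apply/mapP/idP => [[k] | xX].
  by rewrite mem_filter => /andP [Hk _] ->.
have [k Hk Hfk] := surj x.
by exists k => //; rewrite mem_filter mem_iota Hfk xX /= add0n Hk.
Qed.

Lemma idx_uniq (X : {set G}) : uniq (map f (idx X)).
Proof.
rewrite map_inj_in_uniq ?filter_uniq ?iota_uniq //.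
by move/allP: (idx_lt X) => H i j /H Hi /H Hj; apply: Hinj.
Qed.

Lemma idx_size (X : {set G}) : size (idx X) = #|X|.
Proof. by rewrite -{2}(idx_set X) card_setseq undup_id ?idx_uniq // size_map. Qed.

Lemma idx_subs (X : {set G}) k : #|X| = k -> idx X \in subs k.
Proof.
move=> HX; rewrite /subs mem_filter idx_size HX eqxx andTb /idx filter_mask.
apply: (map_f (fun m => mask m (iota 0 9))).
by have := mem_bseqs (map (fun k => f k \in X) (iota 0 9)); rewrite size_map size_iota.
Qed.

Lemma idx0 (X : {set G}) : (0%N \in idx X) = (0 \in X).
Proof. by rewrite mem_filter mem_iota H0 andbT. Qed.

Lemma SS (X : {set G}) P : [set \sum_(x in S) x | S : {set G} in powerset X & P #|S|] =
  [set:: map f (ssP add 0%N P (idx X))].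
Proof. by rewrite (ssP_map P (idx X) H0 Hadd) -ssP_set ?idx_uniq // idx_set. Qed.

Lemma all_ssP P I : all (fun k => k < 9)%N (ssP add 0%N P I).
Proof. by apply/allP => k; apply: ssP_lt. Qed.

Lemma card_SS L : all (fun k => k < 9)%N L -> #|[set:: map f L]| = size (undup L).
Proof. by move=> HL; rewrite card_setseq size_undup_map_in. Qed.

Lemma zero_SS L : all (fun k => k < 9)%N L -> (0 \in [set:: map f L]) = (0%N \in L).
Proof.
move=> HL; rewrite inE; apply/mapP/idP => [[k kL]|HL0]; last by exists 0%N.
rewrite -H0 => Hk; have k9 : (k < 9)%N by move/allP: HL => /(_ k kL).
by rewrite -(Hinj k9 _ (esym Hk)).
Qed.

Lemma SSpos (X : {set G}) : subset_sums X = [set:: map f (Spos add (idx X))].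
Proof.
rewrite /Spos -SS /subset_sums; apply/setP => y.
by apply/imsetP/imsetP => [] [S HS ->]; exists S => //; move: HS; rewrite !inE card_gt0.
Qed.

Lemma SSr (X : {set G}) : subset_sums_r 2 X = [set:: map f (S2 add (idx X))].
Proof. exact: (SS X (fun n => n == 2)%N). Qed.

Lemma SUM (X Y : {set G}) : sumset X Y = [set:: map f [seq add a b | a <- idx X, b <- idx Y]].
Proof.
apply/setP => y; rewrite /sumset inE; apply/imset2P/mapP.
  case=> a b; rewrite -{1}(idx_set X) -{1}(idx_set Y) !inE.
  move=> /mapP [i iI ->] /mapP [j jJ ->] ->.
  by exists (add i j); rewrite ?Hadd // allpairs_f.
case=> k /allpairsP [[i j] /= [iI jJ ->]] ->.
rewrite Hadd; exists (f i) (f j) => //.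
  by rewrite -(idx_set X) inE map_f.
by rewrite -(idx_set Y) inE map_f.
Qed.

Lemma all_pairs I J : all (fun k => k < 9)%N [seq add a b | a <- I, b <- J].
Proof. by apply/allP => k /allpairsP [[i j] /= [_ _ ->]]. Qed.

Lemma main_chk : chk add ->
  (forall A : {set G}, #|A| = 3%N -> zero_sum_free A -> (6 <= #|subset_sums A|)%N) /\
  (forall A : {set G}, #|A| = 3%N -> 0 \notin A -> (5 <= #|subset_sums A|)%N) /\
  (forall A : {set G}, #|A| = 4%N -> 0 \notin A -> (7 <= #|subset_sums A|)%N) /\
  (forall A : {set G}, #|A| = 4%N -> (5 <= #|subset_sums_r 2 A|)%N) /\
  (forall A B : {set G}, #|A| = 4%N -> (2 <= #|B|)%N -> (5 <= #|sumset A B|)%N).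
Proof.
case/and5P => c1 c2 c3 c4 c5; split; [|split; [|split; [|split]]].
- move=> A HA; rewrite /zero_sum_free SSpos zero_SS ?all_ssP // card_SS ?all_ssP //.
  by move/allP: c1 => /(_ _ (idx_subs HA)) /implyP.
- move=> A HA; rewrite -idx0 SSpos card_SS ?all_ssP //.
  by move/allP: c2 => /(_ _ (idx_subs HA)) /implyP.
- move=> A HA; rewrite -idx0 SSpos card_SS ?all_ssP //.
  by move/allP: c3 => /(_ _ (idx_subs HA)) /implyP.
- move=> A HA; rewrite SSr card_SS ?all_ssP //.
  by move/allP: c4 => /(_ _ (idx_subs HA)).
move=> A B HA /card_gt1P [b1 [b2 [b1B b2B b12]]].
have HB : #|[set b1; b2]| = 2%N by rewrite cards2 b12.
have sub : sumset A [set b1; b2] \subset sumset A B.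
  apply/subsetP => y /imset2P [a b aA bB ->]; apply/imset2P; exists a b => //.
  by move: bB; rewrite !inE => /orP [] /eqP ->.
apply: leq_trans (subset_leq_card sub).
rewrite SUM card_SS ?all_pairs //.
by move/allP: c5 => /(_ _ (idx_subs HA)) /allP /(_ _ (idx_subs HB)).
Qed.
End Main.

Theorem lemma2p5 (G : finZmodType) (hG : #|G| = 9%N) :
  (forall A : {set G}, #|A| = 3%N -> zero_sum_free A -> (6 <= #|subset_sums A|)%N) /\
  (forall A : {set G}, #|A| = 3%N -> 0 \notin A -> (5 <= #|subset_sums A|)%N) /\
  (forall A : {set G}, #|A| = 4%N -> 0 \notin A -> (7 <= #|subset_sums A|)%N) /\
  (forall A : {set G}, #|A| = 4%N -> (5 <= #|subset_sums_r 2 A|)%N) /\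
  (forall A B : {set G}, #|A| = 4%N -> (2 <= #|B|)%N -> (5 <= #|sumset A B|)%N).
Proof.
have [add [f [Hc H0 Hadd Hinj]]] := classify hG.
have Hlt : forall i j, (add i j < 9)%N.
  by case: Hc => -> i j; rewrite /addZ9 /addZ33; lia.
apply: (main_chk hG H0 Hadd Hlt Hinj).
by case: Hc => ->; [exact: chk9 | exact: chk33].
Qed.
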